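(* Let $(Y,u)$ and $(Y',u')$ be non-empty ultrametric spaces, let $f:Y\to Y'$ be a map and let $z'\in Y'$ be an attractor for $f$. If $(Y,u)$ is spherically complete, then $z'\in f(Y)$.
   Context: An ultrametric space $(Y,u)$ is a set $Y$ with a map $u$ from $Y\times Y$ onto a totally ordered set $\Gamma$ with last element $\infty$ such that for all $x,y,z\in Y$: $u(y,z)=\infty$ iff $y=z$; $u(y,z)\ge\min\{u(y,x),u(x,z)\}$; $u(y,z)=u(z,y)$. (Larger $u$ means closer.) For $y\in Y$ and $\alpha\in\Gamma$, the closed ball is $B_\alpha(y)=\{z\in Y: u(y,z)\ge\alpha\}$, and $B(x,y):=B_{u(x,y)}(x)$. A ball is a union of a non-empty collection of closed balls which contain a common element. A nest of balls is a set of balls totally ordered by inclusion. $(Y,u)$ is spherically complete if every nest of balls has non-empty intersection. We write $fy$ for $f(y)$. An element $z'\in Y'$ is an attractor for $f:Y\to Y'$ if for every $y\in Y$ with $z'\neq fy$ there is $z\in Y$ such that (AT1) $u'(fz,z')>u'(fy,z')$ and (AT2) $f(B(y,z))\subseteq B(fy,z')$. *)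

(* Defs.v *)
Set Implicit Arguments.

(* A totally ordered set with last element [top] (the paper's infinity). *)
Record TotalOrderTop := {
  G :> Type;
  le : G -> G -> Prop;
  le_refl : forall a, le a a;
  le_trans : forall a b c, le a b -> le b c -> le a c;
  le_antisym : forall a b, le a b -> le b a -> a = b;
  le_total : forall a b, le a b \/ le b a;
  top : G;
  le_top : forall a, le a top
}.

(* c >= min{a,b}  iff  c >= a or c >= b  (total order). *)
Definition ge_min (Γ : TotalOrderTop) (c a b : Γ) : Prop := le Γ a c \/ le Γ b c.

Definition lt (Γ : TotalOrderTop) (a b : Γ) : Prop := le Γ a b /\ a <> b.

Definition is_ultrametric (Y : Type) (Γ : TotalOrderTop) (u : Y -> Y -> Γ) : Prop :=
  (forall y z, u y z = top Γ <-> y = z) /\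
  (forall x y z, ge_min Γ (u y z) (u y x) (u x z)) /\
  (forall y z, u y z = u z y) /\
  (forall a : Γ, exists y z, u y z = a).

Definition cball (Y : Type) (Γ : TotalOrderTop) (u : Y -> Y -> Γ)
  (alpha : Γ) (y : Y) : Y -> Prop := fun z => le Γ alpha (u y z).

Definition Bxy (Y : Type) (Γ : TotalOrderTop) (u : Y -> Y -> Γ) (x y : Y) : Y -> Prop :=
  @cball Y Γ u (u x y) x.

(* A ball: union of a non-empty collection of closed balls with a common
   element.  The collection is a predicate on (alpha, center) pairs. *)
Definition is_ball (Y : Type) (Γ : TotalOrderTop) (u : Y -> Y -> Γ) (B : Y -> Prop) : Prop :=
  exists (C : Γ -> Y -> Prop) (c : Y),
    (exists a y, C a y) /\
    (forall a y, C a y -> @cball Y Γ u a y c) /\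
    (forall z, B z <-> exists a y, C a y /\ @cball Y Γ u a y z).

Definition included (Y : Type) (A B : Y -> Prop) : Prop := forall y, A y -> B y.

Definition is_nest (Y : Type) (Γ : TotalOrderTop) (u : Y -> Y -> Γ)
  (N : (Y -> Prop) -> Prop) : Prop :=
  (forall B, N B -> @is_ball Y Γ u B) /\
  (forall B1 B2, N B1 -> N B2 -> included B1 B2 \/ included B2 B1).

Definition spherically_complete (Y : Type) (Γ : TotalOrderTop) (u : Y -> Y -> Γ) : Prop :=
  forall N, @is_nest Y Γ u N -> exists y, forall B, N B -> B y.

Definition attractor (Y Y' : Type) (Γ Γ' : TotalOrderTop)
  (u : Y -> Y -> Γ) (u' : Y' -> Y' -> Γ') (f : Y -> Y') (z' : Y') : Prop :=
  forall y, z' <> f y ->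
    exists z, lt Γ' (u' (f y) z') (u' (f z) z') /\
      included (fun w => exists x, @Bxy Y Γ u y z x /\ w = f x) (@Bxy Y' Γ' u' (f y) z').

Arguments is_ultrametric {Y Γ} u.
Arguments spherically_complete {Y Γ} u.
Arguments attractor {Y Y' Γ Γ'} u u' f z'.

(* Main.v *)
Require Import Defs.
From Stdlib Require Import Classical ClassicalEpsilon.
From mathcomp Require classical_sets boolp.

Theorem theorem1 (Y Y' : Type) (Γ Γ' : TotalOrderTop)
  (u : Y -> Y -> Γ) (u' : Y' -> Y' -> Γ')
  (HY : is_ultrametric u) (HY' : is_ultrametric u')
  (Yne : inhabited Y) (Y'ne : inhabited Y')
  (f : Y -> Y') (z' : Y') (Hatt : attractor u u' f z')
  (Hsc : spherically_complete u) :
  exists y, f y = z'.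
Proof.
  apply NNPP; intro Hno.
  assert (Hne : forall y, z' <> f y) by (intros y e; apply Hno; exists y; auto).
  destruct HY as [HY'' [Uul [Usym _]]].
  destruct HY' as [_ [Uul' [Usym' _]]].
  pose (d := fun y => u' (f y) z').
  assert (Hz : exists zf : Y -> Y, forall y,
     Defs.lt Γ' (d y) (d (zf y)) /\
     included (fun w => exists x, @Bxy Y Γ u y (zf y) x /\ w = f x) (@Bxy Y' Γ' u' (f y) z')).
  { exists (fun y => proj1_sig (constructive_indefinite_description _ (Hatt y (Hne y)))).
    intro y; exact (proj2_sig (constructive_indefinite_description _ (Hatt y (Hne y)))). }
  destruct Hz as [zf Hzf].
  assert (AT2 : forall s x, le Γ (u s (zf s)) (u s x) -> le Γ' (d s) (u' (f s) (f x))).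
  { intros s x H. apply (proj2 (Hzf s)). exists x. split; [exact H|reflexivity]. }
  assert (F1 : forall s x w a b, le Γ a (u s x) -> le Γ a b -> le Γ b (u x w) -> le Γ a (u s w)).
  { intros s x w a b H1 H2 H3. destruct (Uul x s w) as [H|H].
    - eapply le_trans; [exact H1|exact H].
    - eapply le_trans; [exact H2|]. eapply le_trans; [exact H3|exact H]. }
  assert (F2 : forall s x, le Γ (u s (zf s)) (u s x) -> le Γ' (d s) (d x)).
  { intros s x H. pose proof (AT2 s x H) as H1. unfold d in *.
    destruct (Uul' (f s) (f x) z') as [H2|H2]; [|exact H2].
    eapply le_trans; [exact H1|]. rewrite Usym'. exact H2. }
  assert (F3 : forall s x, le Γ (u s (zf s)) (u s x) -> Defs.lt Γ' (d s) (d x) ->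
             le Γ (u s (zf s)) (u x (zf x))).
  { intros s x H [Hl Hneq].
    destruct (le_total Γ (u s (zf s)) (u x (zf x))) as [H1|H1]; [exact H1|].
    exfalso. apply Hneq.
    assert (H2 : le Γ (u x (zf x)) (u x s)).
    { eapply le_trans; [exact H1|]. rewrite (Usym x s). exact H. }
    pose proof (AT2 x s H2) as H3. unfold d in *.
    apply le_antisym; [exact Hl|].
    destruct (Uul' (f x) (f s) z') as [H4|H4]; [|exact H4].
    eapply le_trans; [exact H3|]. rewrite Usym'. exact H4. }
  assert (ltT : forall a b c, Defs.lt Γ' a b -> Defs.lt Γ' b c -> Defs.lt Γ' a c).
  { intros a b c [H1 H2] [H3 H4]. split; [eapply le_trans; eauto|].
    intro e; subst c. apply H2, le_antisym; auto. }
  assert (ltle : forall a b c, Defs.lt Γ' a b -> le Γ' b c -> Defs.lt Γ' a c).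
  { intros a b c [H1 H2] H3. split; [eapply le_trans; eauto|].
    intro e; subst c. apply H2, le_antisym; auto. }
  pose (R := fun y1 y2 => y1 = y2 \/ (Defs.lt Γ' (d y1) (d y2) /\
      forall w, le Γ (u y2 (zf y2)) (u y2 w) -> le Γ (u y1 (zf y1)) (u y1 w))).
  assert (Rnext : forall s, R s (zf s)).
  { intro s. right. split; [exact (proj1 (Hzf s))|].
    intros w Hw. eapply F1; [apply le_refl| |exact Hw].
    apply F3; [apply le_refl|exact (proj1 (Hzf s))]. }
  assert (Rtr : forall a b c, R a b -> R b c -> R a c).
  { intros a b c [->|[H1 H2]] [->|[H3 H4]]; unfold R; auto.
    right; split; eauto. }
  pose (Rb := fun a b => boolp.asbool (R a b)).
  assert (RbE : forall a b, Rb a b = true <-> R a b).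
  { intros a b. unfold Rb. split; intro H.
    - exact (ssrbool.elimT (boolp.asboolP _) H).
    - exact (ssrbool.introT (boolp.asboolP _) H). }
  destruct (@classical_sets.Zorn Y Rb) as [t Ht].
  - intro t; apply RbE; left; reflexivity.
  - intros r s t H1 H2; apply RbE; apply RbE in H1, H2; eauto.
  - intros s t H1 H2; apply RbE in H1, H2.
    destruct H1 as [->|[H1 _]]; [reflexivity|].
    destruct H2 as [->|[H2 _]]; [reflexivity|].
    exfalso; destruct H1 as [H1 H1']; apply H1', le_antisym; [exact H1|exact (proj1 H2)].
  - intros A HA.
    destruct (classic (exists s0, A s0 /\ forall s, A s -> R s s0)) as [[s0 [As0 Hs0]]|Hnm].
    + exists (zf s0). intros s As; apply RbE. eapply Rtr; [apply Hs0, As|apply Rnext].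
    + destruct (Hsc (fun B => exists s, A s /\ B = (fun w => le Γ (u s (zf s)) (u s w))))
        as [x Hx].
      { split.
        - intros B [s [As ->]].
          exists (fun a y => a = u s (zf s) /\ y = s), s. split; [exists (u s (zf s)), s; auto|].
          split.
          + intros a y [-> ->]. unfold cball. rewrite (proj2 (HY'' s s) eq_refl).
            apply le_top.
          + intro z; split.
            * intro Hz; exists (u s (zf s)), s; split; auto.
            * intros [a [y [[-> ->] Hz]]]; exact Hz.
        - intros B1 B2 [s1 [A1 ->]] [s2 [A2 ->]].
          destruct (HA s1 s2 A1 A2) as [H|H]; apply RbE in H;
            destruct H as [->|[_ H]]; unfold included; auto. }
      exists (zf x). intros s As. apply RbE.
      assert (Hxs : forall s, A s -> le Γ (u s (zf s)) (u s x)).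
      { intros s1 As1. exact (Hx _ (ex_intro _ s1 (conj As1 eq_refl))). }
      assert (Hlt : Defs.lt Γ' (d s) (d x)).
      { apply NNPP; intro Hn. apply Hnm. exists s; split; [exact As|].
        intros s' As'. apply NNPP; intro Hn'. apply Hn.
        destruct (HA s s' As As') as [H|H]; apply RbE in H; [|contradiction].
        destruct H as [<-|[H _]]; [exfalso; apply Hn'; left; reflexivity|].
        eapply ltle; [exact H|apply F2, Hxs, As']. }
      pose proof (F3 s x (Hxs s As) Hlt) as H1.
      assert (H2 : le Γ (u s (zf s)) (u s (zf x))).
      { eapply F1; [apply Hxs, As|exact H1|apply le_refl]. }
      assert (H3 : Defs.lt Γ' (d s) (d (zf x))) by (eapply ltT; [exact Hlt|exact (proj1 (Hzf x))]).
      right; split; [exact H3|].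
      intros w Hw. exact (F1 s (zf x) w _ _ H2 (F3 s (zf x) H2 H3) Hw).
  - pose proof (Ht (zf t) (proj2 (RbE _ _) (Rnext t))) as E.
    destruct (proj1 (Hzf t)) as [_ Hn]. apply Hn. rewrite E. reflexivity.
Qed.
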